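(* There exists a homeomorphism $T\colon\mathscr C\to\mathscr C$ of the Cantor set $\mathscr C$ which is almost totally minimal: $T$ has exactly one fixed point $x^0\in\mathscr C$, and for every $x\in\mathscr C\setminus\{x^0\}$ and every $m\in\mathbb N$, the set $\{T^{mk}(x):k\in\mathbb Z\}$ is dense in $\mathscr C$. *)

(* Defs.v *)
From HB Require Import structures.
From mathcomp Require Import all_boot all_order all_algebra.
From mathcomp Require Import all_classical all_reals topology cantor.
Set Implicit Arguments. Unset Strict Implicit. Unset Printing Implicit Defensive.
Import Order.TTheory GRing.Theory Num.Theory.

Definition ziter {X : Type} (T Tinv : X -> X) (n : int) (x : X) : X :=
  match n with
  | Posz k => iter k T x
  | Negz k => iter k.+1 Tinv x
  end.

Definition homeomorphism_with {X : topologicalType} (T Tinv : X -> X) : Prop :=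
  [/\ cancel T Tinv, cancel Tinv T, continuous T & continuous Tinv].

(* Main.v *)
Require Import Defs.
From HB Require Import structures.
From mathcomp Require Import all_boot all_order all_algebra.
From mathcomp Require Import all_classical all_reals topology cantor.
From mathcomp Require Import zify.
From mathcomp Require Import cyclic.
From Stdlib Require Import FunctionalExtensionality ClassicalEpsilon.
Import Order.TTheory GRing.Theory Num.Theory.
Set Implicit Arguments. Unset Strict Implicit. Unset Printing Implicit Defensive.

Fixpoint hh n := if n is n'.+1 then (hh n').*2.+4 else 0.

Definition spos N (e1 e2 : bool) :=
  if e1 then (if e2 then (hh N).*2.+3 else (hh N).*2.+2)
  else (if e2 then (hh N).+1 else 0).
Definition coff N (b : bool) := if b then (hh N).+2 else 1.

Definition spc N (e1 e2 : bool) (y : nat -> bool) : nat -> bool :=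
  fun i => if (i < N)%N then false else if i == N then true
    else if i == N.+1 then e1 else if i == N.+2 then e2 else y i.
Definition setb p (b : bool) (y : nat -> bool) : nat -> bool :=
  fun i => if i == p then b else y i.

Fixpoint Rk N (y : nat -> bool) : option nat :=
  if N is N'.+1 then
    match Rk N' y with
    | Some r => Some (coff N' (y N'.+2) + r)
    | None => if y N' then Some (spos N' (y N'.+1) (y N'.+2)) else None
    end
  else None.

Fixpoint decp N r (y : nat -> bool) : nat -> bool :=
  if N is N'.+1 then
    if r == 0 then spc N' false false y
    else if r <= hh N' then decp N' r.-1 (setb N'.+2 false y)
    else if r == (hh N').+1 then spc N' false true y
    else if r <= (hh N').*2.+1 then decp N' (r - (hh N').+2) (setb N'.+2 true y)
    else if r == (hh N').*2.+2 then spc N' true false y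
    else spc N' true true y
  else fun i => if (i < 2)%N then false else y i.

Lemma decE N r y : decp N.+1 r y =
    if r == 0 then spc N false false y
    else if r <= hh N then decp N r.-1 (setb N.+2 false y)
    else if r == (hh N).+1 then spc N false true y
    else if r <= (hh N).*2.+1 then decp N (r - (hh N).+2) (setb N.+2 true y)
    else if r == (hh N).*2.+2 then spc N true false y
    else spc N true true y.
Proof. by []. Qed.

Lemma hhS n : hh n.+1 = (hh n).*2.+4. Proof. by []. Qed.

Lemma dec_tail N r y i : (N.+1 < i)%N -> decp N r y i = y i.
Proof.
elim: N r y => [|N IH] r y Ni /=.
  by case: ifP => //; lia.
have spE e1 e2 : spc N e1 e2 y i = y i.
  rewrite /spc; have -> : (i < N) = false by lia.
  have -> : (i == N) = false by lia.
  have -> : (i == N.+1) = false by lia.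
  by have -> : (i == N.+2) = false by lia.
have stE b : decp N r.-1 (setb N.+2 b y) i = y i /\ decp N (r - (hh N).+2) (setb N.+2 b y) i = y i.
  by rewrite !IH ?(ltnW Ni) // /setb; have -> : (i == N.+2) = false by lia.
by repeat case: ifP => _; rewrite ?spE ?(stE false).1 ?(stE true).2.
Qed.

Lemma dec_dep N r y y' : (forall i, (N.+1 < i)%N -> y i = y' i) -> decp N r y = decp N r y'.
Proof.
elim: N r y y' => [|N IH] r y y' H /=.
  by apply: functional_extensionality => i; case: ifP => // ?; apply: H; lia.
have spE e1 e2 : spc N e1 e2 y = spc N e1 e2 y'.
  apply: functional_extensionality => i; rewrite /spc; do 4 (case: ifP => // ?).
  by apply: H; lia.
have stE b r' : decp N r' (setb N.+2 b y) = decp N r' (setb N.+2 b y').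
  apply: IH => i Ni; rewrite /setb; case: ifP => // ?; apply: H; lia.
by repeat case: ifP => _; rewrite ?spE ?stE //.
Qed.

Lemma dec_pref N r y y' i : (i < N.+3)%N -> decp N.+1 r y i = decp N.+1 r y' i.
Proof.
elim: N r y y' i => [|N IH] r y y' i Hi.
  case: i Hi => [|[|[|i]]] // _; rewrite /=; repeat case: ifP => _ //.
rewrite (decE N.+1 r y) (decE N.+1 r y').
have spE e1 e2 : spc N.+1 e1 e2 y i = spc N.+1 e1 e2 y' i.
  rewrite /spc; do 4 (case: ifP => // ?); lia.
have stE b r' : decp N.+1 r' (setb N.+3 b y) i = decp N.+1 r' (setb N.+3 b y') i.
  have [iN|iN] := ltnP i N.+3; first exact: IH.
  have -> : i = N.+3 by lia.
  by rewrite !dec_tail // /setb eqxx.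
move: stE; move: (decp N.+1) => D stE.
by repeat case: ifP => _; rewrite ?spE ?stE //.
Qed.

Lemma RS N y : Rk N.+1 y = match Rk N y with
    | Some r => Some (coff N (y N.+2) + r)
    | None => if y N then Some (spos N (y N.+1) (y N.+2)) else None
    end.
Proof. by []. Qed.

Lemma RNone N y : Rk N y = None <-> (forall i, (i < N)%N -> y i = false).
Proof.
elim: N => [|N IH]; first by split => // _ i.
rewrite RS; case E: (Rk N y) => [r|].
  split => // H; suff : Rk N y = None by rewrite E.
  by apply/IH => i iN; apply: H; lia.
have {}IH := (proj1 IH) E.
case: ifP => yN; split => // H.
- by have := H N (ltnSn N); rewrite yN.
- by move=> i; rewrite ltnS leq_eqVlt => /orP[/eqP ->|]; [|apply: IH].
Qed.

Lemma pos_lt N e1 e2 : (spos N e1 e2 < hh N.+1)%N.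
Proof. rewrite /spos hhS; case: e1; case: e2; lia. Qed.

Lemma Rlt N y r : Rk N y = Some r -> (r < hh N)%N.
Proof.
elim: N r => [//|N IH] r; rewrite RS hhS.
case E: (Rk N y) => [r'|].
  move=> [<-]; have := IH _ E; rewrite /coff; case: (y N.+2); lia.
case: ifP => // _ [<-]; have := pos_lt N (y N.+1) (y N.+2); by rewrite hhS.
Qed.

Lemma Rloc N y y' : (forall i, (i < N.+2)%N -> y i = y' i) -> Rk N y = Rk N y'.
Proof.
elim: N => [//|N IH] H; rewrite !RS IH; last by move=> i iN; apply: H; lia.
have h0 : y N = y' N by apply: H; lia.
have h1 : y N.+1 = y' N.+1 by apply: H; lia.
have h2 : y N.+2 = y' N.+2 by apply: H; lia.
by rewrite h0 h1 h2.
Qed.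

Lemma sp_below N e1 e2 y i : (i < N)%N -> spc N e1 e2 y i = false.
Proof. by rewrite /spc => ->. Qed.

Lemma R_sp N e1 e2 y : Rk N.+1 (spc N e1 e2 y) = Some (spos N e1 e2).
Proof.
rewrite RS; have -> : Rk N (spc N e1 e2 y) = None.
  by apply/RNone => i iN; rewrite sp_below.
have a0 : spc N e1 e2 y N = true by rewrite /spc ltnn eqxx.
have a1 : spc N e1 e2 y N.+1 = e1.
  by rewrite /spc; do 2 (case: ifP; first lia); rewrite eqxx.
have a2 : spc N e1 e2 y N.+2 = e2.
  by rewrite /spc; do 3 (case: ifP; first lia); rewrite eqxx.
by rewrite a0 a1 a2.
Qed.

Lemma Rdec N r y : (r < hh N)%N -> Rk N (decp N r y) = Some r.
Proof.
elim: N r y => [//|N IH] r y; rewrite hhS => Hr; rewrite decE.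
case: ifP => [/eqP -> | r0]; first by rewrite R_sp.
case: ifP => [rh|r1].
  rewrite RS IH; last by lia.
  by rewrite dec_tail // /setb eqxx /coff; congr Some; lia.
case: ifP => [/eqP ->|r2]; first by rewrite R_sp.
case: ifP => [rh|r3].
  rewrite RS IH; last by lia.
  by rewrite dec_tail // /setb eqxx /coff; congr Some; lia.
case: ifP => [/eqP ->|r4]; first by rewrite R_sp.
rewrite R_sp /spos; congr Some; lia.
Qed.

Lemma setb_id p y : setb p (y p) y = y.
Proof. by apply: functional_extensionality => i; rewrite /setb; case: eqP => // ->. Qed.

Lemma decR N r y : Rk N y = Some r -> decp N r y = y.
Proof.
elim: N r y => [//|N IH] r y; rewrite RS decE.
case E: (Rk N y) => [r'|].
  have := Rlt E; move=> lt [<-]; rewrite /coff.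
  case Ey: (y N.+2).
    have -> : ((hh N).+2 + r' == 0) = false by lia.
    have -> : ((hh N).+2 + r' <= hh N)%N = false by lia.
    have -> : ((hh N).+2 + r' == (hh N).+1) = false by lia.
    have -> : ((hh N).+2 + r' <= (hh N).*2.+1)%N by lia.
    have -> : (hh N).+2 + r' - (hh N).+2 = r' by lia.
    by rewrite -Ey setb_id IH.
  have -> : (1 + r' == 0) = false by lia.
  have -> : (1 + r' <= hh N)%N by lia.
  by rewrite -Ey setb_id IH.
have /RNone Hz := E.
case: ifP => // yN [<-].
have spy e1 e2 : y N.+1 = e1 -> y N.+2 = e2 -> spc N e1 e2 y = y.
  move=> <- <-; apply: functional_extensionality => i; rewrite /spc.
  case: ifP => [/Hz -> //|_]; case: eqP => [->|_]; first by rewrite yN.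
  by case: eqP => [->|_] //; case: eqP => [->|_].
rewrite /spos; case: (y N.+1) (y N.+2) (spy (y N.+1) (y N.+2) erefl erefl) => -[] S.
- have -> : ((hh N).*2.+3 == 0) = false by lia.
  have -> : ((hh N).*2.+3 <= hh N)%N = false by lia.
  have -> : ((hh N).*2.+3 == (hh N).+1) = false by lia.
  have -> : ((hh N).*2.+3 <= (hh N).*2.+1)%N = false by lia.
  by have -> : ((hh N).*2.+3 == (hh N).*2.+2) = false by lia.
- have -> : ((hh N).*2.+2 == 0) = false by lia.
  have -> : ((hh N).*2.+2 <= hh N)%N = false by lia.
  have -> : ((hh N).*2.+2 == (hh N).+1) = false by lia.
  have -> : ((hh N).*2.+2 <= (hh N).*2.+1)%N = false by lia.
  by rewrite eqxx.
- have -> : ((hh N).+1 == 0) = false by lia.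
  have -> : ((hh N).+1 <= hh N)%N = false by lia.
  by rewrite eqxx.
- by [].
Qed.

Lemma decS N b y : (b < hh N)%N -> decp N.+1 (coff N (y N.+2) + b) y = decp N b y.
Proof.
move=> bh; rewrite decE /coff; case Ey: (y N.+2).
  have -> : ((hh N).+2 + b == 0) = false by lia.
  have -> : ((hh N).+2 + b <= hh N)%N = false by lia.
  have -> : ((hh N).+2 + b == (hh N).+1) = false by lia.
  have -> : ((hh N).+2 + b <= (hh N).*2.+1)%N by lia.
  have -> : (hh N).+2 + b - (hh N).+2 = b by lia.
  by rewrite -Ey setb_id.
have -> : (1 + b == 0) = false by lia.
have -> : (1 + b <= hh N)%N by lia.
by rewrite -Ey setb_id.
Qed.

Lemma liftR L d y a : Rk L y = Some a -> exists a', [/\ Rk (L + d) y = Some a', (a <= a')%N,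
  (forall b, (b < hh L)%N -> (a' - a + b < hh (L + d))%N) &
  (forall b, (b < hh L)%N -> decp L b y = decp (L + d) (a' - a + b) y)].
Proof.
move=> Ha; elim: d => [|d [a' [H1 H2 H3 H4]]].
  exists a; rewrite addn0 Ha subnn; split => // b; by rewrite add0n.
exists (coff (L + d) (y (L + d).+2) + a'); rewrite addnS RS H1; split => //.
- lia.
- move=> b /H3; rewrite hhS /coff; case: (y _); lia.
- move=> b bh; rewrite H4 // -decS; last exact: H3.
  congr decp; lia.
Qed.

Lemma Rsum L d y a : Rk L y = Some a ->
  Rk (L + d) y = Some (a + \sum_(L <= j < L + d) coff j (y j.+2)).
Proof.
move=> Ha; elim: d => [|d IH]; first by rewrite addn0 big_geq // addn0.
rewrite addnS RS IH big_nat_recr /= ?leq_addr //; congr Some; lia.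
Qed.

Definition Tgen (f : nat -> nat) (y : nat -> bool) : nat -> bool :=
  match excluded_middle_informative (exists i, y i) with
  | left P => match Rk (ex_minn P).+2 y with Some a => decp (ex_minn P).+2 (f a) y | None => y end
  | right _ => y
  end.
Definition Tf := Tgen S.
Definition Tinvf := Tgen predn.

Lemma interiorR (y : nat -> bool) k : y k -> (forall i, (i < k)%N -> y i = false) ->
  exists c, [/\ Rk k.+2 y = Some c, (0 < c)%N & (c.+1 < hh k.+2)%N].
Proof.
move=> yk Hk; have Rk : Rk k y = None by apply/RNone.
exists (coff k.+1 (y k.+3) + spos k (y k.+1) (y k.+2)).
rewrite RS RS Rk yk; split => //.
- rewrite /coff; clear Hk yk Rk; case: (y k.+3); lia.
- have := pos_lt k (y k.+1) (y k.+2); rewrite /coff !hhS; clear Hk yk Rk; case: (y k.+3); lia.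
Qed.

Lemma RSome_ex L (y : nat -> bool) a : Rk L y = Some a -> exists i, y i.
Proof.
move=> Ha; case: (excluded_middle_informative (exists i, y i)) => // H.
suff : Rk L y = None by rewrite Ha.
apply/RNone => i _; apply/negbTE/negP => yi; apply: H; by exists i.
Qed.

Lemma Rle_entry L (y : nat -> bool) a k : Rk L y = Some a -> (forall i, (i < k)%N -> y i = false) -> (k < L)%N.
Proof.
move=> Ha Hk; rewrite ltnNge; apply/negP => Lk.
suff : Rk L y = None by rewrite Ha.
by apply/RNone => i iL; apply: Hk; lia.
Qed.

Lemma Tgen_level (f : nat -> nat) (y : nat -> bool) L a : Rk L y = Some a ->
  (forall k c, y k -> (forall i, (i < k)%N -> y i = false) -> Rk k.+2 y = Some c ->
     decp k.+2 (f c) y = decp L (f a) y) ->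
  Tgen f y = decp L (f a) y.
Proof.
move=> Ha H; rewrite /Tgen; case: excluded_middle_informative => [P|nP]; last first.
  by case: nP; exact: RSome_ex Ha.
case: ex_minnP => k yk kmin.
have Hk : forall i, (i < k)%N -> y i = false.
  move=> i ik; apply/negbTE/negP => yi; have := kmin i yi; lia.
have [c [Hc _ _]] := interiorR yk Hk.
by rewrite Hc; apply: H.
Qed.

Lemma TL (y : nat -> bool) L a : Rk L y = Some a -> (a.+1 < hh L)%N -> Tf y = decp L a.+1 y.
Proof.
move=> Ha aL; apply (Tgen_level Ha); move=> k c yk Hk Hc.
have kL := Rle_entry Ha Hk.
have [c' [Hc' c0 cl]] := interiorR yk Hk; move: Hc'; rewrite Hc => -[E]; subst c'.
have [Lk|Lk] := leqP L k.+1.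
  have EL : L = k.+1 by lia.
  subst L.
  have := liftR 1 Ha; rewrite addn1 => -[a' [Ra' aa' _ H4]].
  move: Ra'; rewrite Hc => -[E]; subst a'.
  rewrite (H4 a.+1) //; congr decp; lia.
have := liftR (L - k.+2) Hc => -[a' [Ra' aa' _ H4]].
rewrite (_ : k.+2 + (L - k.+2) = L) in Ra' H4; last by lia.
move: Ra'; rewrite Ha => -[E]; subst a'.
rewrite H4 //; congr decp; lia.
Qed.

Lemma TinvL (y : nat -> bool) L a : Rk L y = Some a -> (0 < a)%N -> Tinvf y = decp L a.-1 y.
Proof.
move=> Ha a0; apply (Tgen_level Ha); move=> k c yk Hk Hc.
have kL := Rle_entry Ha Hk.
have [c' [Hc' c0 cl]] := interiorR yk Hk; move: Hc'; rewrite Hc => -[E]; subst c'.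
have aL := Rlt Ha.
have [Lk|Lk] := leqP L k.+1.
  have EL : L = k.+1 by lia.
  subst L.
  have := liftR 1 Ha; rewrite addn1 => -[a' [Ra' aa' _ H4]].
  move: Ra'; rewrite Hc => -[E]; subst a'.
  rewrite (H4 a.-1); last by lia.
  by congr decp; lia.
have := liftR (L - k.+2) Hc => -[a' [Ra' aa' _ H4]].
rewrite (_ : k.+2 + (L - k.+2) = L) in Ra' H4; last by lia.
move: Ra'; rewrite Ha => -[E]; subst a'.
rewrite H4; last by lia.
congr decp; lia.
Qed.

Lemma entry_ex (y : nat -> bool) : (exists i, y i) ->
  exists k, y k /\ forall i, (i < k)%N -> y i = false.
Proof.
move=> P; case: (ex_minnP P) => k yk kmin; exists k; split => // i ik.
by apply/negbTE/negP => yi; have := kmin i yi; lia.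
Qed.

Lemma Tgen_spine f (y : nat -> bool) : ~ (exists i, y i) -> Tgen f y = y.
Proof. by move=> H; rewrite /Tgen; case: excluded_middle_informative. Qed.

Lemma dec_decE N r r' y : decp N r (decp N r' y) = decp N r y.
Proof. by apply: dec_dep => i Ni; rewrite dec_tail. Qed.

Lemma TinvfK : cancel Tf Tinvf.
Proof.
move=> y; case: (excluded_middle_informative (exists i, y i)) => [P|nP]; last first.
  by rewrite /Tf /Tinvf !Tgen_spine.
have [k [yk Hk]] := entry_ex P.
have [c [Hc c0 cl]] := interiorR yk Hk.
rewrite (TL Hc cl) (TinvL (Rdec _ cl)) // dec_decE.
exact: decR.
Qed.

Lemma TfK : cancel Tinvf Tf.
Proof.
move=> y; case: (excluded_middle_informative (exists i, y i)) => [P|nP]; last first.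
  by rewrite /Tf /Tinvf !Tgen_spine.
have [k [yk Hk]] := entry_ex P.
have [c [Hc c0 cl]] := interiorR yk Hk.
rewrite (TinvL Hc c0) (TL (Rdec _ _)); last by lia.
  by rewrite prednK // dec_decE decR.
by lia.
Qed.

Lemma Tf_fix (y : nat -> bool) : Tf y = y <-> y = (fun _ => false).
Proof.
split; last by move=> ->; rewrite /Tf Tgen_spine // => -[].
move=> Hy; case: (excluded_middle_informative (exists i, y i)) => [P|nP]; last first.
  apply: functional_extensionality => i; apply/negbTE/negP => yi; apply: nP; by exists i.
have [k [yk Hk]] := entry_ex P.
have [c [Hc c0 cl]] := interiorR yk Hk.
have := Rdec y cl; rewrite -(TL Hc cl) Hy Hc => -[]; lia.
Qed.

Lemma iterT N (y : nat -> bool) a j : Rk N y = Some a -> (a + j < hh N)%N ->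
  iter j Tf y = decp N (a + j) y.
Proof.
move=> Ha; elim: j => [|j IH] aj /=; first by rewrite addn0 decR.
rewrite IH; last by lia.
rewrite (TL (Rdec _ _)); last by lia.
  by rewrite dec_decE addnS.
by lia.
Qed.

Lemma iterTinv N (y : nat -> bool) a j : Rk N y = Some a -> (j <= a)%N ->
  iter j Tinvf y = decp N (a - j) y.
Proof.
have aN := @Rlt N y a.
move=> Ha; elim: j => [|j IH] aj /=; first by rewrite subn0 decR.
have := aN Ha => aN'.
rewrite IH; last by lia.
rewrite (TinvL (Rdec _ _)); last by lia.
  by rewrite dec_decE; congr decp; lia.
by lia.
Qed.

Lemma hh_gt0 N : (0 < hh N.+1)%N. Proof. by rewrite hhS. Qed.

Lemma sp0L N z : decp N.+1 0 z = spc N false false z. Proof. by rewrite decE. Qed.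
Lemma sp1L N z : decp N.+1 (hh N).+1 z = spc N false true z.
Proof.
rewrite decE; have -> : ((hh N).+1 == 0) = false by lia.
have -> : ((hh N).+1 <= hh N)%N = false by lia.
by rewrite eqxx.
Qed.
Lemma sp2L N z : decp N.+1 (hh N).*2.+2 z = spc N true false z.
Proof.
rewrite decE; have -> : ((hh N).*2.+2 == 0) = false by lia.
have -> : ((hh N).*2.+2 <= hh N)%N = false by lia.
have -> : ((hh N).*2.+2 == (hh N).+1) = false by lia.
have -> : ((hh N).*2.+2 <= (hh N).*2.+1)%N = false by lia.
by rewrite eqxx.
Qed.
Lemma sp3L N z : decp N.+1 (hh N).*2.+3 z = spc N true true z.
Proof.
rewrite decE; have -> : ((hh N).*2.+3 == 0) = false by lia.
have -> : ((hh N).*2.+3 <= hh N)%N = false by lia.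
have -> : ((hh N).*2.+3 == (hh N).+1) = false by lia.
have -> : ((hh N).*2.+3 <= (hh N).*2.+1)%N = false by lia.
by have -> : ((hh N).*2.+3 == (hh N).*2.+2) = false by lia.
Qed.
Lemma c0b N z : decp N.+2 1 z = decp N.+1 0 (setb N.+3 false z).
Proof.
rewrite decE; have -> : (1 <= hh N.+1)%N by rewrite hh_gt0.
by [].
Qed.
Lemma c0t N z : decp N.+2 (hh N.+1) z = decp N.+1 (hh N.+1).-1 (setb N.+3 false z).
Proof.
rewrite decE; have := hh_gt0 N => H.
have -> : (hh N.+1 == 0) = false by lia.
by rewrite leqnn.
Qed.
Lemma c1b N z : decp N.+2 (hh N.+1).+2 z = decp N.+1 0 (setb N.+3 true z).
Proof.
rewrite decE; have := hh_gt0 N => H.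
have -> : ((hh N.+1).+2 == 0) = false by lia.
have -> : ((hh N.+1).+2 <= hh N.+1)%N = false by lia.
have -> : ((hh N.+1).+2 == (hh N.+1).+1) = false by lia.
have -> : ((hh N.+1).+2 <= (hh N.+1).*2.+1)%N by lia.
by rewrite subnn.
Qed.
Lemma c1t N z : decp N.+2 (hh N.+1).*2.+1 z = decp N.+1 (hh N.+1).-1 (setb N.+3 true z).
Proof.
rewrite decE; have := hh_gt0 N => H.
have -> : ((hh N.+1).*2.+1 == 0) = false by lia.
have -> : ((hh N.+1).*2.+1 <= hh N.+1)%N = false by lia.
have -> : ((hh N.+1).*2.+1 == (hh N.+1).+1) = false by lia.
have -> : ((hh N.+1).*2.+1 <= (hh N.+1).*2.+1)%N by lia.
by congr decp; lia.
Qed.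
Lemma stopL N z : decp N.+1 (hh N.+1).-1 z = spc N true true z.
Proof. rewrite hhS; have -> : ((hh N).*2.+4).-1 = (hh N).*2.+3 by []. exact: sp3L. Qed.

Lemma low_T (y : nat -> bool) k i : y k.+1 -> (forall j, (j < k.+1)%N -> y j = false) ->
  (i < k)%N -> Tf y i = false /\ Tinvf y i = false.
Proof.
move=> yk Hk ik.
have [c [Hc c0 cl]] := interiorR yk Hk.
have Ec : c = coff k.+2 (y k.+4) + spos k.+1 (y k.+2) (y k.+3).
  by move: Hc; rewrite RS RS (proj2 (RNone _ _) Hk) yk => -[].
rewrite (TL Hc cl) (TinvL Hc c0); subst c.
have H1 := hh_gt0 k.
have HS : hh k.+2 = (hh k.+1).*2.+4 by [].
have viaL r' r : r = coff k.+2 (y k.+4) + r' -> (r' < hh k.+2)%N -> decp k.+3 r y = decp k.+2 r' y.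
  by move=> -> ?; rewrite decS.
have finL N e1 e2 z : (i < N)%N -> spc N e1 e2 z i = false by move=> ?; rewrite sp_below.
rewrite /spos /coff.
case Eb: (y k.+4); case E1: (y k.+2); case E2: (y k.+3); split.
- rewrite (_ : ((hh k.+2).+2 + (hh k.+1).*2.+3).+1 = (hh k.+2).*2.+2); last by rewrite HS; lia. rewrite sp2L finL //; lia.
- rewrite (viaL (hh k.+1).*2.+2); [|rewrite /coff Eb; lia|lia]. rewrite sp2L finL //; lia.
- rewrite (viaL (hh k.+1).*2.+3); [|rewrite /coff Eb; lia|lia]. rewrite sp3L finL //; lia.
- rewrite (viaL (hh k.+1).*2.+1); [|rewrite /coff Eb; lia|lia]. rewrite c1t stopL finL //; lia.
- rewrite (viaL (hh k.+1).+2); [|rewrite /coff Eb; lia|lia]. rewrite c1b sp0L finL //; lia.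
- rewrite (viaL (hh k.+1)); [|rewrite /coff Eb; lia|lia]. rewrite c0t stopL finL //; lia.
- rewrite (viaL 1); [|rewrite /coff Eb; lia|lia]. rewrite c0b sp0L finL //; lia.
- rewrite (_ : ((hh k.+2).+2 + 0).-1 = (hh k.+2).+1); last by rewrite HS; lia. rewrite sp1L finL //; lia.
- rewrite (_ : (1 + (hh k.+1).*2.+3).+1 = (hh k.+2).+1); last by rewrite HS; lia. rewrite sp1L finL //; lia.
- rewrite (viaL (hh k.+1).*2.+2); [|rewrite /coff Eb; lia|lia]. rewrite sp2L finL //; lia.
- rewrite (viaL (hh k.+1).*2.+3); [|rewrite /coff Eb; lia|lia]. rewrite sp3L finL //; lia.
- rewrite (viaL (hh k.+1).*2.+1); [|rewrite /coff Eb; lia|lia]. rewrite c1t stopL finL //; lia.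
- rewrite (viaL (hh k.+1).+2); [|rewrite /coff Eb; lia|lia]. rewrite c1b sp0L finL //; lia.
- rewrite (viaL (hh k.+1)); [|rewrite /coff Eb; lia|lia]. rewrite c0t stopL finL //; lia.
- rewrite (viaL 1); [|rewrite /coff Eb; lia|lia]. rewrite c0b sp0L finL //; lia.
- rewrite (_ : (1 + 0).-1 = 0) //. rewrite sp0L finL //; lia.
Qed.

Lemma ntlemma m B0 : (0 < m)%N -> exists L B, [/\ (0 < L)%N, (B0 <= B)%N, (2 <= L * B)%N,
   (forall s, 2 ^ (L * (B + s)) = 2 ^ (L * B) %[mod m]) & coprime (2 ^ (L * B) - 3) m].
Proof.
move=> m0; have [m' c2m' Em] := pfactor_coprime (isT : prime 2) m0.
set e := logn 2 m in Em.
have m'0 : (0 < m')%N by move: m0; rewrite Em muln_gt0 => /andP[].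
exists (totient m'), (B0 + e + 2).
have L0 : (0 < totient m')%N by rewrite totient_gt0.
have LB : (B0 + e + 2 <= totient m' * (B0 + e + 2))%N by rewrite leq_pmull.
have Eu n : 2 ^ (totient m' * n) = 1 %[mod m'].
  by rewrite expnM -modnXm Euler_exp_totient // modnXm exp1n.
have cop : coprime m' (2 ^ e) by rewrite coprime_sym coprimeXl // coprime_sym.
split => //; first lia; first lia.
- move=> s; rewrite Em; apply/eqP; rewrite chinese_remainder //; apply/andP; split.
    by rewrite Eu Eu.
  have h1 : 2 ^ e %| 2 ^ (totient m' * (B0 + e + 2 + s)) by apply: dvdn_exp2l; nia.
  have h2 : 2 ^ e %| 2 ^ (totient m' * (B0 + e + 2)) by apply: dvdn_exp2l; nia.
  by rewrite (eqP h1) (eqP h2).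
- set x := 2 ^ _ - 3.
  have x4 : (4 <= 2 ^ (totient m' * (B0 + e + 2)))%N.
    by rewrite (_ : 4 = 2 ^ 2) // leq_exp2l //; lia.
  rewrite Em coprimeMr; apply/andP; split; last first.
    apply: coprimeXr; rewrite coprimen2 /x oddB; last by lia.
    by rewrite oddX; case: (totient m' * _) x4.
  have d1 : m' %| x + 2.
    rewrite (_ : x + 2 = 2 ^ (totient m' * (B0 + e + 2)) - 1); last by rewrite /x; lia.
    rewrite -eqn_mod_dvd; last by lia.
    by apply/eqP; exact: Eu.
  rewrite /coprime -dvdn1.
  have g2 : gcdn x m' %| 2.
    by rewrite -(dvdn_addr 2 (dvdn_gcdl x m')); apply: dvdn_trans d1; exact: dvdn_gcdr.
  by rewrite -(eqP c2m'); rewrite dvdn_gcd g2 dvdn_gcdr.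
Qed.

Lemma hh_exp j : hh j + 4 = 2 ^ j.+2.
Proof. elim: j => [//|j IH]; rewrite hhS expnS -IH; lia. Qed.

Definition Ssum (ch : nat -> bool) A N := \sum_(A <= j < N) (if ch j then (hh j).+1 else 0).

Definition Ach m A N r := exists ch, Ssum ch A N = r %[mod m].

Lemma Ach_step m A N r b : (A <= N)%N -> Ach m A N r ->
  Ach m A N.+1 (r + (if b then (hh N).+1 else 0)).
Proof.
move=> AN [ch Hch]; exists (fun j => if j == N then b else ch j).
rewrite /Ssum big_nat_recr //= eqxx.
rewrite (@eq_big_nat _ _ _ _ _ _ (fun j => if ch j then (hh j).+1 else 0)); last first.
  by move=> j /andP[_ jN]; have -> : (j == N) = false by lia.
by rewrite -modnDml -/(Ssum ch A N) Hch modnDml.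
Qed.

Lemma Ach_ext m A N N' r : (A <= N)%N -> (N <= N')%N -> Ach m A N r -> Ach m A N' r.
Proof.
move=> AN NN' H; have -> : N' = N + (N' - N) by lia.
elim: (N' - N) => [|d IH]; first by rewrite addn0.
have := Ach_step false (_ : A <= N + d)%N IH; rewrite addn0 addnS; apply; lia.
Qed.

Lemma Ach_mod m A N r r' : r = r' %[mod m] -> Ach m A N r -> Ach m A N r'.
Proof. by move=> E [ch H]; exists ch; rewrite H. Qed.

Lemma Ach_main m L B0 : (0 < m)%N -> exists N, (B0 <= N)%N /\ (L <= N)%N /\ forall r, Ach m L N r.
Proof.
move=> m0; have [L2 [B [L20 BB LB2 Hper Hcop]]] := ntlemma (B0 + L + 2) m0.
set J := fun t => L2 * (B + t) - 2.
have JL t : (L <= J t)%N by rewrite /J; nia.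
have JS t : (J t < J t.+1)%N by rewrite /J; nia.
set u0 := 2 ^ (L2 * B) - 3.
have dJ t : (hh (J t)).+1 = u0 %[mod m].
  have E1 : (hh (J t)).+1 = 2 ^ (L2 * (B + t)) - 3.
    have := hh_exp (J t); rewrite /J; have -> : (L2 * (B + t) - 2).+2 = L2 * (B + t) by nia.
    lia.
  have E2 : (3 <= 2 ^ (L2 * (B + t)))%N.
    by rewrite (leq_trans (_ : 3 <= 2 ^ 2)%N) // leq_exp2l //; nia.
  have E3 : (3 <= 2 ^ (L2 * B))%N.
    by rewrite (leq_trans (_ : 3 <= 2 ^ 2)%N) // leq_exp2l //; nia.
  apply/eqP; rewrite E1 /u0 -(eqn_modDr 3) !subnK //; exact/eqP/Hper.
have At t : Ach m L (J t) (t * u0).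
  elim: t => [|t IH]; first by apply: (@Ach_ext _ _ L); rewrite ?JL //; exists (fun=> false); rewrite /Ssum big_geq.
  apply: (@Ach_ext _ _ (J t).+1); [have := JL t; lia|exact: JS|].
  apply: (Ach_mod (r := t * u0 + (hh (J t)).+1)); last by apply: (Ach_step true); [exact: JL|].
  by apply/eqP; rewrite mulSn addnC eqn_modDr; exact/eqP/dJ.
exists (J m); split; first by rewrite /J; nia.
split; first exact: JL.
move=> r.
have u00 : (0 < u0)%N.
  rewrite /u0; have : (4 <= 2 ^ (L2 * B))%N by rewrite (_ : 4 = 2 ^ 2) // leq_exp2l //.
  lia.
case: (egcdnP m u00) => km kn Ekm _.
move: Hcop; rewrite -/u0 /coprime => /eqP g1; rewrite g1 in Ekm.
have Jt : forall t, (t <= m)%N -> Ach m L (J m) (t * u0).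
  move=> t tm; apply: (@Ach_ext _ _ (J t)); [exact: JL| |exact: At].
  rewrite /J; nia.
apply: (Ach_mod (r := ((r * km) %% m) * u0)); last by apply: Jt; apply: ltnW; rewrite ltn_mod.
by rewrite modnMml -mulnA Ekm mulnDr muln1 mulnA modnMDl.
Qed.

Lemma approxR (x z : nat -> bool) m M Lx ax : (0 < m)%N -> Rk Lx x = Some ax ->
  exists N a P, [/\ Rk N x = Some a, (P < hh N)%N, P = a %[mod m] &
    forall i, (i < M)%N -> decp N P x i = z i].
Proof.
move=> m0 Hx.
pose w := fun i => if (i < M)%N then z i else i == M.
case Ew: (Rk M.+1 w) => [rho|]; last first.
  by have := (proj1 (RNone _ _) Ew) M (ltnSn M); rewrite /w ltnn eqxx.
have rhoL := Rlt Ew.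
have [N [NLx [LN Hach]]] := Ach_main M.+1 Lx m0.
have [a [Ha _ _ _]] := liftR (N - Lx) Hx.
rewrite (_ : Lx + (N - Lx) = N) in Ha; last by lia.
have [ch Hch] := Hach (a + m * (rho + N) - (rho + (N - M.+1))).
pose x2 := fun i => if (M.+3 <= i)%N && (i <= N.+1)%N then ch (i - 2) else x i.
pose u := decp M.+1 rho x2.
have Ru : Rk M.+1 u = Some rho by apply: Rdec.
have := Rsum (N - M.+1) Ru; rewrite (_ : M.+1 + (N - M.+1) = N); last by lia.
have -> : \sum_(M.+1 <= j < N) coff j (u j.+2) = (N - M.+1) + Ssum ch M.+1 N.
  rewrite /Ssum -[in RHS](muln1 (N - M.+1)) -sum_nat_const_nat -big_split /=.
  apply: eq_big_nat => j /andP[jM jN].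
  rewrite /u dec_tail; last by lia.
  rewrite /x2; have -> : (M.+3 <= j.+2)%N && (j.+2 <= N.+1)%N by lia.
  by rewrite (_ : j.+2 - 2 = j) ?subn2 //; case: (ch j).
move=> RNu.
exists N, a, (rho + ((N - M.+1) + Ssum ch M.+1 N)); split => //.
- exact: Rlt RNu.
- set S := Ssum ch M.+1 N in Hch *; set K := N - M.+1 in Hch *.
  rewrite (_ : rho + (K + S) = (rho + K) + S); last by lia.
  rewrite -modnDmr Hch modnDmr.
  rewrite (_ : rho + K + (a + m * (rho + N) - (rho + K)) = m * (rho + N) + a); last by nia.
  by rewrite mulnC modnMDl.
- move=> i iM.
  have -> : decp N (rho + (N - M.+1 + Ssum ch M.+1 N)) x = u.
    rewrite -[in RHS](decR RNu); apply: dec_dep => j Nj.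
    rewrite /u dec_tail; last by lia.
    by rewrite /x2; case: ifP => //; lia.
  rewrite /u (@dec_pref M rho x2 w) //; last by lia.
  by rewrite decR // /w iM.
Qed.

Lemma orbit_hit (x z : nat -> bool) m M : (exists i, x i) -> (0 < m)%N ->
  exists q (neg : bool), (neg -> 0 < q)%N /\
    forall i, (i < M)%N -> (if neg then iter (m * q) Tinvf x else iter (m * q) Tf x) i = z i.
Proof.
move=> P m0; have [k [xk Hk]] := entry_ex P.
have [c [Hc _ _]] := interiorR xk Hk.
have [N [a [Pr [Ha PN Pa Hz]]]] := approxR z M m0 Hc.
have aN := Rlt Ha.
have [aP|Pa'] := leqP a Pr.
  have /dvdnP [q Eq] : m %| Pr - a by rewrite -eqn_mod_dvd // Pa.
  exists q, false; split => // i iM.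
  rewrite mulnC -Eq (iterT Ha); last by lia.
  by rewrite subnKC // Hz.
have /dvdnP [q Eq] : m %| a - Pr by rewrite -eqn_mod_dvd ?Pa //; lia.
exists q, true; split.
  move=> _; move: Eq; case: q => //; lia.
move=> i iM; rewrite mulnC -Eq (iterTinv Ha); last by lia.
by rewrite (_ : a - (a - Pr) = Pr) ?Hz //; lia.
Qed.

Lemma loc_T (x : nat -> bool) n : (exists i, x i) -> exists M, forall y : nat -> bool,
  (forall j, (j < M)%N -> y j = x j) -> forall i, (i < n)%N -> Tf y i = Tf x i /\ Tinvf y i = Tinvf x i.
Proof.
move=> P; have [k [xk Hk]] := entry_ex P.
have [c [Hc c0 cl]] := interiorR xk Hk.
exists (maxn n k.+4) => y Hy i iN.
have Hcy : Rk k.+2 y = Some c.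
  by rewrite -Hc; apply: Rloc => j jk; apply: Hy; lia.
have dl r : decp k.+2 r y i = decp k.+2 r x i.
  have [ik|ik] := ltnP i k.+4; first exact: dec_pref.
  by rewrite !dec_tail ?Hy //; lia.
by rewrite (TL Hc cl) (TL Hcy cl) (TinvL Hc c0) (TinvL Hcy c0) !dl.
Qed.

Lemma loc_spine n (y : nat -> bool) : (forall j, (j < n.+4)%N -> y j = false) ->
  forall i, (i < n)%N -> Tf y i = false /\ Tinvf y i = false.
Proof.
move=> Hy i iN; case: (excluded_middle_informative (exists i, y i)) => [P|nP].
  have [k [yk Hk]] := entry_ex P.
  have kn : (n.+4 <= k)%N by rewrite leqNgt; apply/negP => /Hy; rewrite yk.
  case: k yk Hk kn => [|k] yk Hk kn; first lia.
  have ik : (i < k)%N by lia.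
  exact: low_T yk Hk ik.
by rewrite /Tf /Tinvf !Tgen_spine // Hy //; lia.
Qed.

Local Open Scope classical_set_scope.

Lemma cvg_cantor {X : Type} (F : set_system X) {FF : Filter F} (g : X -> cantor_space) (f : cantor_space) :
  (forall i, \forall t \near F, g t i = f i) -> g @ F --> f.
Proof.
move=> H.
apply/cvg_sup => i U [V] [[W] oW <-] WfN WU.
apply: (filterS WU); rewrite nbhs_simpl.
apply: filterS (H i) => t /= ->.
exact: WfN.
Qed.

Lemma near_coord (x : cantor_space) i : \forall y \near x, y i = x i.
Proof.
have := @proj_continuous nat (fun _ => bool) i x.
move=> /(_ [set x i]) ; apply.
exact: discrete_set1.
Qed.

Lemma near_prefix (x : cantor_space) M : \forall y \near x, forall i, (i < M)%N -> y i = x i.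
Proof.
elim: M => [|M IH]; first by near=> y => i.
near=> y => i.
have H1 : y M = x M by near: y; exact: near_coord.
have H2 : forall i, (i < M)%N -> y i = x i by near: y; exact: IH.
by rewrite ltnS leq_eqVlt => /orP[/eqP ->|iM]; [|apply: H2].
Unshelve. all: by end_near.
Qed.

Lemma nbhs_cylinder (z : cantor_space) (O : set cantor_space) : nbhs z O ->
  exists M, forall y : cantor_space, (forall i, (i < M)%N -> y i = z i) -> O y.
Proof.
move=> Oz; apply: contrapT => /forallNP H.
have {}H M : exists y : cantor_space, (forall i, (i < M)%N -> y i = z i) /\ ~ O y.
  have := H M => /existsNP [y /not_implyP [H1 H2]]; by exists y.
have [g Hg] := boolp.choice H.
have : g @ \oo --> z.
  apply: cvg_cantor => i; exists i.+1 => // n /= ni.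
  by apply: (Hg n).1.
move=> /(_ _ Oz); rewrite nbhs_simpl => -[N _ HN].
by apply: (Hg N).2; apply: HN => /=.
Qed.

Lemma continuous_cantor (f : cantor_space -> cantor_space) :
  (forall (x : cantor_space) i, exists M, forall y : cantor_space,
     (forall j, (j < M)%N -> y j = x j) -> f y i = f x i) -> continuous f.
Proof.
move=> H x; apply: cvg_cantor => i.
have [M HM] := H x i.
by apply: filterS (near_prefix x M) => y /HM.
Qed.

Local Open Scope ring_scope.

Theorem theorem6p1 :
  exists (T Tinv : cantor_space -> cantor_space) (x0 : cantor_space),
    [/\ homeomorphism_with T Tinv,
        (forall x : cantor_space, T x = x <-> x = x0) &
        (forall x : cantor_space, x <> x0 ->
           forall m : nat, (0 < m)%N ->
             dense [set y | exists k : int, y = ziter T Tinv (m%:Z * k) x])].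
Proof.
have spineE (x : cantor_space) : ~ (exists i, x i) -> x = (fun _ => false).
  move=> nP; apply: functional_extensionality => i.
  by apply/negbTE/negP => xi; apply: nP; exists i.
have contT : forall (F : (nat -> bool) -> nat -> bool),
    (forall (x : nat -> bool) n, (exists i, x i) -> exists M, forall y : nat -> bool,
      (forall j, (j < M)%N -> y j = x j) -> forall i, (i < n)%N -> F y i = F x i) ->
    (forall n (y : nat -> bool), (forall j, (j < n.+4)%N -> y j = false) ->
      forall i, (i < n)%N -> F y i = false) ->
    F (fun _ => false) = (fun _ => false) ->
    continuous (F : cantor_space -> cantor_space).
  move=> F Hl Hs H0; apply: continuous_cantor => x i.
  case: (excluded_middle_informative (exists i, x i)) => [P|nP].
    have [M HM] := Hl x i.+1 P; exists M => y Hy; exact: HM.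
  rewrite (spineE x nP) H0; exists i.+4.+1 => y Hy.
  have Hy' : forall j, (j < i.+1.+4)%N -> y j = false by move=> j jn; rewrite Hy.
  exact: (Hs i.+1 y Hy' i (ltnSn i)).
exists Tf, Tinvf, (fun _ => false); split.
- split; [exact: TinvfK | exact: TfK | |].
  + apply: contT.
    * move=> x n P; have [M HM] := loc_T n P; exists M => y Hy i iN; exact: (HM y Hy i iN).1.
    * move=> n y Hy i iN; exact: (loc_spine Hy iN).1.
    * by rewrite /Tf Tgen_spine // => -[].
  + apply: contT.
    * move=> x n P; have [M HM] := loc_T n P; exists M => y Hy i iN; exact: (HM y Hy i iN).2.
    * move=> n y Hy i iN; exact: (loc_spine Hy iN).2.
    * by rewrite /Tinvf Tgen_spine // => -[].
- move=> x; exact: Tf_fix.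
- move=> x xne m m0 O [z Oz] oO.
  have [M HM] := nbhs_cylinder (open_nbhs_nbhs (conj oO Oz)).
  have P : exists i, x i.
    case: (excluded_middle_informative (exists i, x i)) => // nP.
    by case: xne; exact: spineE.
  have [q [neg [qpos Hq]]] := orbit_hit z M P m0.
  exists (if neg then iter (m * q) Tinvf x else iter (m * q) Tf x); split.
    by apply: HM => i iM; apply: Hq.
  case: neg qpos Hq => qpos _.
    exists (- q%:Z); rewrite mulrN -PoszM.
    have := qpos isT; case: q {qpos} => // q _.
    have mq : (0 < m * q.+1)%N by rewrite muln_gt0 m0.
    by rewrite -(prednK mq) -NegzE.
  by exists q%:Z; rewrite -PoszM.
Qed.
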